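(* Let $W=\langle \mathcal{D},\mathcal{N},\mathrm{wr},\mathrm{gd}\rangle$ be a (1-safe) DAW-net with reachability graph $\mathit{RG}_W$, and let $\mathit{TS}_{\mathrm{pddl}(W)}$ be the transition system derived from the planning-domain encoding $\mathrm{pddl}(W)$ (as defined in the context). Then $\mathit{RG}_W$ and $\mathit{TS}_{\mathrm{pddl}(W)}$ are trace equivalent.
   Context: **Data model and guards.** A data model is $\mathcal{D}=(\mathcal{V},\Delta,\mathrm{dm},\mathrm{ord})$: $\mathcal{V}$ a set of variables; $\Delta=\{\Delta_1,\dots,\Delta_n\}$ domains (not necessarily disjoint); $\mathrm{dm}:\mathcal{V}\to\Delta$ total surjective, giving each variable its finite domain; $\mathrm{ord}$ a partial function giving, for some domains $\Delta_i$, a partial order $\le_{\Delta_i}$. An assignment is a partial function $\eta$ on $\mathcal{V}$ with $\eta(v)\in\mathrm{dm}(v)$ when defined. Guards: $\Phi ::= \mathit{true}\mid\mathrm{def}(v)\mid t_1=t_2\mid t_1\le t_2\mid\neg\Phi\mid\Phi\wedge\Phi$, $v\in\mathcal{V}$, $t_1,t_2\in\mathcal{V}\cup\bigcup_i\Delta_i$. With $t[\eta]=\eta(t)$ if $t$ is a variable on which $\eta$ is defined and $t$ otherwise: $\mathcal{D},\eta\models\mathit{true}$; $\mathcal{D},\eta\models\mathrm{def}(v)$ iff $\eta(v)$ defined; $\mathcal{D},\eta\models t_1=t_2$ iff $t_1[\eta],t_2[\eta]\notin\mathcal{V}$ and they are equal; $\mathcal{D},\eta\models t_1\le t_2$ iff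 $t_1[\eta],t_2[\eta]\in\Delta_i$ for some $i$ with $\mathrm{ord}(\Delta_i)$ defined and $t_1[\eta]\le_{\Delta_i}t_2[\eta]$; $\neg,\wedge$ classical. **DAW-nets.** Petri net $\mathcal{N}=(P,T,F)$, $F\subseteq(P\times T)\cup(T\times P)$, ${}^\bullet t=\{p\mid(p,t)\in F\}$, $t^\bullet=\{p\mid(t,p)\in F\}$, markings $M:P\to\mathbb{N}$; $\mathcal{N}$ is a workflow net with distinguished places $\mathit{start}$ and $\mathit{sink}$. A DAW-net is $W=\langle\mathcal{D},\mathcal{N},\mathrm{wr},\mathrm{gd}\rangle$ with $\mathrm{wr}(t)$ a partial function from $\mathcal{V}$ such that $\mathrm{wr}(t)(v)\subseteq\mathrm{dm}(v)$, and $\mathrm{gd}(t)$ a guard, for each $t\in T$. A state is $(M,\eta)$. A firing $(M,\eta)\xrightarrow{t}(M',\eta')$ is valid iff $\{p\mid M(p)>0\}\supseteq{}^\bullet t$; $\mathcal{D},\eta\models\mathrm{gd}(t)$; $M'(p)=M(p)-1$ for $p\in{}^\bullet t\setminus t^\bullet$, $M(p)+1$ for $p\in t^\bullet\setminus{}^\bullet t$, $M(p)$ otherwise; $\mathrm{dom}(\eta')=\mathrm{dom}(\eta)\cup\{v\mid\mathrm{wr}(t)(v)\neq\emptyset\}\setminus\{v\mid\mathrm{wr}(t)(v)=\emptyset\}$, with $\eta'(v)\in\mathrm{wr}(t)(v)$ if $v\in\mathrm{dom}(\mathrm{wr}(t))$ and $\eta'(v)=\eta(v)$ otherwise. Initial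 state $(M_s,\eta_s)$: one token in $\mathit{start}$, none elsewhere, $\eta_s$ empty. Standing assumption: $W$ is 1-safe (reachable markings have at most one token per place). $\mathcal{V}'$ denotes the finite set of variables appearing in $W$. **Reachability graph.** $\mathit{RG}_W=(T,\overline{S},\overline{s}_0,\overline{\delta})$, $\overline{s}_0=(M_s,\eta_s)$, $\overline{S}$ and $\overline{\delta}$ the least sets with $\overline{s}_0\in\overline{S}$ such that if $(M,\eta)\in\overline{S}$ and $(M,\eta)\xrightarrow{t}(M',\eta')$ is valid then $(M',\eta')\in\overline{S}$ and $((M,\eta),t,(M',\eta'))\in\overline{\delta}$. **Trace equivalence.** A path is a sequence $s_0\xrightarrow{l_1}\cdots\xrightarrow{l_n}s_n$ ($n\ge0$) from the initial state along transitions. $\mathit{RG}$ and $\mathit{TS}$ are trace equivalent iff there is an injective map $\mathrm{enc}$ from states and transitions of $\mathit{RG}$ to states and labels of $\mathit{TS}$ such that (1) every path $s_0\xrightarrow{t_1}\cdots\xrightarrow{t_n}s_n$ of $\mathit{RG}$ yields a path $\mathrm{enc}(s_0)\xrightarrow{\mathrm{enc}(t_1)}\cdots\xrightarrow{\mathrm{enc}(t_n)}\mathrm{enc}(s_n)$ of $\mathit{TS}$, and (2) for every path $s'_0\xrightarrow{t'_1}\cdots\xrightarrow{t'_n}s'_n$ of $\mathit{TS}$ there is a path $s_0\xrightarrow{t_1}\cdots\xrightarrow{t_n}s_n$ of $\mathit{RG}$ with $\mathrm{enc}(s_i)=s'_i$ and $\mathrm{enc}(t_i)=t'_i$. **State-variable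 planning.** Given objects $B$, state variables $v$ each with a range $\mathrm{Range}(v)\subseteq B$, and rigid relations over $B$, a state is an assignment of each state variable to an element of its range. Preconditions are Boolean combinations of atoms $\mathrm{true}$, $r(z_1,\dots,z_n)$ and $z_1=z_2$, where the $z_i$ are constants, parameters or state variables (state variables evaluated at the current state). An action template $\alpha$ has a head $\mathit{act}(z_1,\dots,z_k)$ with parameters ranging over finite sets, a precondition $\mathrm{pre}(\alpha)$, and effects $\mathrm{eff}(\alpha)$, a set of assignments $v\leftarrow z$; a ground action substitutes constants for the parameters. The transition function $\gamma$ is defined on $(s,a)$ iff $\mathrm{pre}(a)$ holds in $s$, and $\gamma(s,a)=\{(v,w)\mid v\leftarrow w\in\mathrm{eff}(a)\}\cup\{(v,w)\in s\mid v$ is not assigned in $\mathrm{eff}(a)\}$. **The encoding $\mathrm{pddl}(W)$.** State variables: each $v\in\mathcal{V}'$ with range $\mathrm{dm}(v)\cup\{\mathrm{null}\}$, and a Boolean state variable for each $p\in P$. Rigid relations: $\mathrm{ord}=\bigcup_i\{(o,o')\in\Delta_i^2\mid o\le_{\Delta_i}o'\}$ (over $\Delta_i$ with $\mathrm{ord}(\Delta_i)$ defined), and for $t\in T$ and $v\in\mathrm{dom}(\mathrm{wr}(t))$ the unary relation $wr_{t,v}=\mathrm{wr}(t)(v)$ if $\mathrm{wr}(t)(v)\neq\emptyset$ and $wr_{t,v}=\{\mathrm{null}\}$ otherwise. Guard translation $[\cdot]$: $[\mathit{true}]=\mathrm{true}$, $[\mathrm{def}(v)]=\neg(v=\mathrm{null})$,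 $[v=t_2]=\neg(v=\mathrm{null})\wedge(v=t_2)$, $[t_1\le t_2]=\mathrm{ord}(t_1,t_2)$, $[\neg\Phi]=\neg[\Phi]$, $[\Phi_1\wedge\Phi_2]=[\Phi_1]\wedge[\Phi_2]$. For each $t\in T$ with $\mathrm{dom}(\mathrm{wr}(t))=\{v_1,\dots,v_k\}$, the template $\alpha_t$ has head $t(z_{v_1},\dots,z_{v_k})$, precondition $[\mathrm{gd}(t)]\wedge\bigwedge_{i}wr_{t,v_i}(z_{v_i})\wedge\bigwedge_{p\in{}^\bullet t}(p=\mathrm{true})$, and effects $v_i\leftarrow z_{v_i}$ ($1\le i\le k$), $p\leftarrow\mathrm{false}$ for $p\in{}^\bullet t\setminus t^\bullet$, $p\leftarrow\mathrm{true}$ for $p\in t^\bullet$. **Mapping and transition system.** $\Psi(M,\eta)$ is the planning state mapping $v\mapsto\eta(v)$ if $\eta(v)$ is defined and $v\mapsto\mathrm{null}$ otherwise ($v\in\mathcal{V}'$), and $p\mapsto\mathrm{true}$ if $M(p)>0$, $p\mapsto\mathrm{false}$ if $M(p)=0$. $\mathit{TS}_{\mathrm{pddl}(W)}=(T,S_{\mathrm{pddl}},s_0,\delta_{\mathrm{pddl}})$ with $s_0=\Psi(\overline{s}_0)$, $S_{\mathrm{pddl}}$ the least set containing $s_0$ and closed under $s\mapsto\gamma(s,a)$ for ground actions $a$ of the templates $\alpha_t$, and $\delta_{\mathrm{pddl}}=\{(s,t,s')\in S_{\mathrm{pddl}}\times T\times S_{\mathrm{pddl}}\mid\gamma(s,a_t)=s'$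 for some ground action $a_t$ of $\alpha_t\}$. *)

(* Defs.v *)
From HB Require Import structures.
From mathcomp Require Import all_boot.
From mathcomp Require Import finmap.

Set Implicit Arguments.
Unset Strict Implicit.
Unset Printing Implicit Defensive.

Local Open Scope fset_scope.
Local Open Scope fmap_scope.

Inductive gterm (V Val : Type) := TVar of V | TConst of Val.

Inductive guard (V Val : Type) :=
| GTrue
| GDef of V
| GEq of gterm V Val & gterm V Val
| GLe of gterm V Val & gterm V Val
| GNot of guard V Val
| GAnd of guard V Val & guard V Val.

Arguments GTrue {V Val}.

Definition gterm_vars (V Val : Type) (t : gterm V Val) : seq V :=
  match t with TVar v => [:: v] | TConst _ => [::] end.
Definition gterm_consts (V Val : Type) (t : gterm V Val) : seq Val :=
  match t with TVar _ => [::] | TConst c => [:: c] end.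

Fixpoint guard_vars (V Val : Type) (g : guard V Val) : seq V :=
  match g with
  | GTrue => [::]
  | GDef v => [:: v]
  | GEq a b | GLe a b => gterm_vars a ++ gterm_vars b
  | GNot g => guard_vars g
  | GAnd g1 g2 => guard_vars g1 ++ guard_vars g2
  end.

Fixpoint guard_consts (V Val : Type) (g : guard V Val) : seq Val :=
  match g with
  | GTrue | GDef _ => [::]
  | GEq a b | GLe a b => gterm_consts a ++ gterm_consts b
  | GNot g => guard_consts g
  | GAnd g1 g2 => guard_consts g1 ++ guard_consts g2
  end.

(*   F ⊆ (P×T) ∪ (T×P) is given by its two halves Fin and Fout         *)
Record daw (V Val : choiceType) (I P T : finType) := Daw {
  Dom   : I -> {fset Val};
  dm    : V -> I;
  ordD  : I -> option (rel Val);
  Fin   : P -> T -> bool;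
  Fout  : T -> P -> bool;
  start : P;
  sink  : P;
  wr    : T -> {fmap V -> {fset Val}};
  gd    : T -> guard V Val
}.

Section DawDefs.
Context {V Val : choiceType} {I P T : finType}.
Implicit Types (W : daw V Val I P T).

Definition is_data_model W : Prop :=
  (forall i : I, exists v : V, dm W v = i) /\
  (forall (i : I) (le : rel Val), ordD W i = Some le ->
     {in Dom W i, reflexive le} /\
     {in Dom W i &, antisymmetric le} /\
     {in Dom W i & &, transitive le}).

Definition pre_set W (t : T) : {set P} := [set p | Fin W p t].
Definition post_set W (t : T) : {set P} := [set p | Fout W t p].

Definition net_edge W : rel (P + T) :=
  fun x y => match x, y with
             | inl p, inr t => Fin W p t
             | inr t, inl p => Fout W t p
             | _, _ => false
             end.

Definition is_workflow_net W : Prop :=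
  (forall t : T, ~~ Fout W t (start W)) /\
  (forall t : T, ~~ Fin W (sink W) t) /\
  (forall x : P + T,
      connect (net_edge W) (inl (start W)) x /\
      connect (net_edge W) x (inl (sink W))).

Definition is_daw W : Prop :=
  is_data_model W /\ is_workflow_net W /\
  (forall (t : T) (v : V) (Sw : {fset Val}),
      (wr W t).[? v] = Some Sw -> Sw `<=` Dom W (dm W v)) /\
  (forall (t : T) (c : Val), c \in guard_consts (gd W t) ->
      exists i : I, c \in Dom W i).

Definition assignment := V -> option Val.
Definition marking := P -> nat.
Definition dstate := (marking * assignment)%type.

Definition tval (eta : assignment) (t : gterm V Val) : V + Val :=
  match t with
  | TVar v => match eta v with Some c => inr c | None => inl v end
  | TConst c => inr c
  end.

Fixpoint sat W (eta : assignment) (g : guard V Val) : Prop :=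
  match g with
  | GTrue => True
  | GDef v => eta v <> None
  | GEq a b => match tval eta a, tval eta b with
               | inr x, inr y => x = y
               | _, _ => False end
  | GLe a b => match tval eta a, tval eta b with
               | inr x, inr y => exists (i : I) (le : rel Val),
                   ordD W i = Some le /\ x \in Dom W i /\ y \in Dom W i /\ le x y
               | _, _ => False end
  | GNot g => ~ sat W eta g
  | GAnd g1 g2 => sat W eta g1 /\ sat W eta g2
  end.

Definition fire W (s : dstate) (t : T) (s' : dstate) : Prop :=
  let: (M, eta) := s in let: (M', eta') := s' in
  (forall p, p \in pre_set W t -> 0 < M p) /\
  sat W eta (gd W t) /\
  (forall p, M' p =
     if p \in pre_set W t :\: post_set W t then (M p - 1)%N
     else if p \in post_set W t :\: pre_set W t then (M p + 1)%N
     else M p) /\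
  (forall v, match (wr W t).[? v] with
             | Some Sw => if Sw == fset0 then eta' v = None
                         else exists x, eta' v = Some x /\ x \in Sw
             | None => eta' v = eta v
             end).

Definition init_dstate W : dstate := (fun p => if p == start W then 1 else 0,
                                      fun _ => None).

Inductive rg_reach W : dstate -> Prop :=
| rg_init : rg_reach W (init_dstate W)
| rg_step s t s' : rg_reach W s -> fire W s t s' -> rg_reach W s'.

Definition rg_delta W (s : dstate) (t : T) (s' : dstate) : Prop :=
  rg_reach W s /\ fire W s t s'.

Definition one_safe W : Prop :=
  forall s, rg_reach W s -> forall p, s.1 p <= 1.

Definition Vp W : {fset V} :=
  [fset v | v in flatten [seq (domf (wr W t) : seq V) ++ guard_vars (gd W t)
                        | t <- enum T]].

(* planning state: each v ∈ V' ↦ an object of dm(v) ∪ {null} (null = None),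
   each place p ↦ a Boolean *)
Definition pstate W := ({ffun Vp W -> option Val} * {ffun P -> bool})%type.

Definition pvar W (s : pstate W) (v : V) : option Val :=
  match insub v with Some x => s.1 x | None => None end.

(* precondition language: terms are state variables, constants (objects:
   values or null) and parameters z_v *)
Inductive pterm := PVar of V | PConst of option Val | PParam of V.

Inductive pform :=
| PTrue
| PEq of pterm & pterm
| POrd of pterm & pterm
| PWr of T & V & pterm
| PPlace of P
| PNot of pform
| PAnd of pform & pform.

Definition ord_rel W (o o' : option Val) : Prop :=
  match o, o' with
  | Some x, Some y => exists (i : I) (le : rel Val),
      ordD W i = Some le /\ x \in Dom W i /\ y \in Dom W i /\ le x y
  | _, _ => False
  end.

Definition wr_rel W (t : T) (v : V) (o : option Val) : Prop :=
  match (wr W t).[? v] with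
  | Some Sw => if Sw == fset0 then o = None else exists x, o = Some x /\ x \in Sw
  | None => False
  end.

Definition peval W (s : pstate W) (z : V -> option Val) (a : pterm) : option Val :=
  match a with PVar v => pvar s v | PConst o => o | PParam v => z v end.

Fixpoint psat W (s : pstate W) (z : V -> option Val) (f : pform) : Prop :=
  match f with
  | PTrue => True
  | PEq a b => peval s z a = peval s z b
  | POrd a b => ord_rel W (peval s z a) (peval s z b)
  | PWr t v a => wr_rel W t v (peval s z a)
  | PPlace p => s.2 p = true
  | PNot f => ~ psat s z f
  | PAnd f g => psat s z f /\ psat s z g
  end.

Definition tr_term (a : gterm V Val) : pterm :=
  match a with TVar v => PVar v | TConst c => PConst (Some c) end.

Fixpoint tr_guard (g : guard V Val) : pform :=
  match g with
  | GTrue => PTrue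
  | GDef v => PNot (PEq (PVar v) (PConst None))
  | GEq a b => PAnd (PNot (PEq (tr_term a) (PConst None)))
                    (PEq (tr_term a) (tr_term b))
  | GLe a b => POrd (tr_term a) (tr_term b)
  | GNot g => PNot (tr_guard g)
  | GAnd g1 g2 => PAnd (tr_guard g1) (tr_guard g2)
  end.

Definition big_and (fs : seq pform) : pform := foldr PAnd PTrue fs.

Definition pre_action W (t : T) : pform :=
  PAnd (tr_guard (gd W t))
   (PAnd (big_and [seq PWr t v (PParam v) | v <- (domf (wr W t) : seq V)])
         (big_and [seq PPlace p | p <- enum (pre_set W t)])).

Definition apply_eff W (t : T) (z : V -> option Val) (s : pstate W) : pstate W :=
  ([ffun x : Vp W => if val x \in domf (wr W t) then z (val x) else s.1 x],
   [ffun p : P => if p \in pre_set W t :\: post_set W t then false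
                  else if p \in post_set W t then true
                  else s.2 p]).

(* γ(s, a) = s'  for the ground action a = α_t[z] *)
Definition gamma_is W (s : pstate W) (t : T) (z : V -> option Val)
  (s' : pstate W) : Prop :=
  psat s z (pre_action W t) /\ apply_eff t z s = s'.

Definition Psi W (s : dstate) : pstate W :=
  ([ffun x : Vp W => s.2 (val x)], [ffun p : P => 0 < s.1 p]).

Inductive ts_reach W : pstate W -> Prop :=
| ts_init : ts_reach (Psi W (init_dstate W))
| ts_step s t z s' : ts_reach s -> gamma_is s t z s' -> ts_reach s'.

Definition ts_delta W (s : pstate W) (t : T) (s' : pstate W) : Prop :=
  ts_reach s /\ ts_reach s' /\ exists z, gamma_is s t z s'.

End DawDefs.

Fixpoint steps (S L : Type) (d : S -> L -> S -> Prop) (s : S)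
  (ss : seq (L * S)) : Prop :=
  match ss with
  | [::] => True
  | (l, s') :: rest => d s l s' /\ steps d s' rest
  end.

Definition is_path (S L : Type) (init : S) (d : S -> L -> S -> Prop)
  (s0 : S) (ss : seq (L * S)) : Prop :=
  s0 = init /\ steps d s0 ss.

Definition trace_equiv (SR LR ST LT : Type)
  (reachR : SR -> Prop) (initR : SR) (dR : SR -> LR -> SR -> Prop)
  (initT : ST) (dT : ST -> LT -> ST -> Prop) : Prop :=
  exists (encS : SR -> ST) (encL : LR -> LT),
    (forall x y, reachR x -> reachR y -> encS x = encS y -> x = y) /\
    injective encL /\
    (forall s0 ss, is_path initR dR s0 ss ->
       is_path initT dT (encS s0) [seq (encL p.1, encS p.2) | p <- ss]) /\
    (forall s0' ss', is_path initT dT s0' ss' ->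
       exists s0 ss, is_path initR dR s0 ss /\ encS s0 = s0' /\
         [seq (encL p.1, encS p.2) | p <- ss] = ss').

(* Main.v *)
Require Import Defs.
From HB Require Import structures.
From mathcomp Require Import all_boot finmap.
From Stdlib Require Import FunctionalExtensionality.
Set Implicit Arguments. Unset Strict Implicit.
Local Open Scope fset_scope.
Local Open Scope fmap_scope.

Section Proofs.
Context {V Val : choiceType} {I P T : finType} (W : daw V Val I P T).

Lemma inVp v t :
  v \in (domf (wr W t) : seq V) ++ guard_vars (gd W t) -> v \in Vp W.
Proof. move=> h. rewrite /Vp inE /=. apply/flatten_mapP. exists t => //. by rewrite mem_enum. Qed.

Lemma domf_Vp v t : v \in domf (wr W t) -> v \in Vp W.
Proof. by move=> h; apply: (inVp (t:=t)); rewrite mem_cat h. Qed.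

Lemma gd_Vp v t : v \in guard_vars (gd W t) -> v \in Vp W.
Proof. by move=> h; apply: (inVp (t:=t)); rewrite mem_cat h orbT. Qed.

Lemma reach_none s : rg_reach W s -> forall v, v \notin Vp W -> s.2 v = None.
Proof.
elim=> [|[M eta] t [M' eta'] _ IH [_ [_ [_ Hw]]]] v Hv //=.
have := Hw v. have Hd : v \notin domf (wr W t).
  by apply/negP => /domf_Vp; apply/negP.
by rewrite not_fnd //= => ->; apply: (IH v Hv).
Qed.

Lemma pvar_Psi (s : dstate) v : v \in Vp W -> pvar (Psi W s) v = s.2 v.
Proof. move=> h; rewrite /pvar insubT /= ffunE //. Qed.

Lemma tr_term_eval (ps : pstate W) z (eta : V -> option Val) a :
  (forall v, v \in gterm_vars a -> pvar ps v = eta v) ->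
  peval ps z (tr_term a) = match Defs.tval eta a with inr x => Some x | inl _ => None end.
Proof.
case: a => [v|c] //= h. rewrite h ?mem_seq1 //. by case: (eta v).
Qed.

Lemma guard_equiv (ps : pstate W) z (eta : V -> option Val) g :
  (forall v, v \in guard_vars g -> pvar ps v = eta v) ->
  (sat W eta g <-> psat ps z (tr_guard g)).
Proof.
elim: g => [|v|a b|a b|g IH|g1 IH1 g2 IH2] /= h.
- by [].
- by rewrite h ?mem_seq1.
- rewrite (tr_term_eval z (eta:=eta)); last by move=> v hv; apply: h; rewrite mem_cat hv.
  rewrite (tr_term_eval z (eta:=eta) (a:=b)); last by move=> v hv; apply: h; rewrite mem_cat hv orbT.
  case: (Defs.tval eta a) => [x|x]; case: (Defs.tval eta b) => [y|y]; split => //=;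
  first [by case | by move=> -> | by case=> _ [] | by case=> ? [] | by case=> []].
- rewrite /ord_rel (tr_term_eval z (eta:=eta)); last by move=> v hv; apply: h; rewrite mem_cat hv.
  rewrite (tr_term_eval z (eta:=eta) (a:=b)); last by move=> v hv; apply: h; rewrite mem_cat hv orbT.
  by case: (Defs.tval eta a) => [x|x]; case: (Defs.tval eta b) => [y|y].
- by rewrite (IH h).
- rewrite (IH1) ?(IH2) //; move=> v hv; apply: h; rewrite mem_cat hv ?orbT //.
Qed.

Lemma big_and_map (A : eqType) (F : A -> pform) (l : seq A) (ps : pstate W) z :
  psat ps z (big_and [seq F x | x <- l]) <-> forall x, x \in l -> psat ps z (F x).
Proof.
elim: l => [|a l IH] /=; first by split.
rewrite IH; split.
- by case=> h1 h2 x; rewrite inE => /orP [/eqP ->|/h2].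
- by move=> h; split; [apply: h; rewrite inE eqxx | move=> x hx; apply: h; rewrite inE hx orbT].
Qed.

Lemma guard_Psi (s : dstate) z t :
  sat W s.2 (gd W t) <-> psat (Psi W s) z (tr_guard (gd W t)).
Proof. apply: guard_equiv => v hv; apply: pvar_Psi; exact: gd_Vp hv. Qed.

Definition one_safe' := one_safe W.

Lemma places_eq (M M' : marking) t :
  (forall p, p \in pre_set W t -> 0 < M p) ->
  (forall p, M p <= 1) ->
  (forall p, M' p =
     if p \in pre_set W t :\: post_set W t then (M p - 1)%N
     else if p \in post_set W t :\: pre_set W t then (M p + 1)%N
     else M p) ->
  forall p, (0 < M' p) = (if p \in pre_set W t :\: post_set W t then false
                  else if p \in post_set W t then true
                  else 0 < M p).
Proof.
move=> hpre hle hM p; rewrite hM.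
case: ifP => [|h1].
  move=> _; have := hle p; case: (M p) => [|[|n]] //.
rewrite [p \in post_set W t :\: _]inE.
case hpost: (p \in post_set W t); last by rewrite andbF.
rewrite andbT; case hp: (p \in pre_set W t) => /=; last by rewrite addn1.
exact: hpre.
Qed.

Lemma step_fwd (s s' : dstate) t :
  (forall p, s.1 p <= 1) -> fire W s t s' -> exists z, gamma_is (Psi W s) t z (Psi W s').
Proof.
case: s => M eta; case: s' => M' eta' /= hle [hpre [hg [hM hw]]].
exists eta'; split.
- split; first by apply/(guard_Psi (M,eta)).
  split.
  + apply/big_and_map => v hv /=. rewrite /wr_rel /=. have := hw v. rewrite in_fnd //.
  + apply/big_and_map => p; rewrite mem_enum => hp /=. rewrite ffunE. exact: hpre.
- rewrite /apply_eff /Psi /=; congr pair; apply/ffunP => x; rewrite !ffunE /=.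
  + case: ifP => // hx. have := hw (val x). by rewrite not_fnd ?hx.
  + by rewrite (places_eq hpre hle hM).
Qed.

Lemma step_bwd (s : dstate) t z (ps' : pstate W) :
  (forall p, s.1 p <= 1) -> gamma_is (Psi W s) t z ps' ->
  exists s', fire W s t s' /\ Psi W s' = ps'.
Proof.
case: s => M eta /= hle [[hg [hwr hpl]] <-].
pose M' := fun p => if p \in pre_set W t :\: post_set W t then (M p - 1)%N
     else if p \in post_set W t :\: pre_set W t then (M p + 1)%N
     else M p.
pose eta' := fun v => if v \in domf (wr W t) then z v else eta v.
have hpre : forall p, p \in pre_set W t -> 0 < M p.
  move=> p hp; move/big_and_map: hpl => /(_ p); rewrite mem_enum /= ffunE; by apply.
exists (M', eta'); split.
- split; first exact: hpre.
  split; first by apply/(guard_Psi (M,eta) z).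
  split; first by [].
  move=> v; rewrite /eta'. case: fndP => hv //=.
  by move/big_and_map: hwr => /(_ v hv) /=; rewrite /wr_rel in_fnd.
- rewrite /apply_eff /Psi /=; congr pair; apply/ffunP => x; rewrite !ffunE /=.
  + by rewrite /eta'.
  + by rewrite (places_eq hpre hle (M' := M')).
Qed.

Lemma reach_ts s : one_safe W -> rg_reach W s -> ts_reach (Psi W s).
Proof.
move=> hs; elim=> [|s0 t s1 h0 IH hf]; first exact: ts_init.
have [z hz] := step_fwd (hs _ h0) hf.
exact: ts_step IH hz.
Qed.

Lemma Psi_inj x y : one_safe W -> rg_reach W x -> rg_reach W y -> Psi W x = Psi W y -> x = y.
Proof.
move=> hs hx hy; case: x hx => M eta hx; case: y hy => M' eta' hy [h1 h2].
have hm : M = M'.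
  apply: functional_extensionality => p.
  have := f_equal (fun f : {ffun P -> bool} => f p) h2; rewrite !ffunE.
  have := hs _ hx p; have := hs _ hy p; rewrite /=.
  by case: (M p) => [|[|?]]; case: (M' p) => [|[|?]].
have he : eta = eta'.
  apply: functional_extensionality => v.
  case hv: (v \in Vp W).
    have := f_equal (fun f : {ffun Vp W -> option Val} => f [` hv]) h1; by rewrite !ffunE.
  have := reach_none hx (v:=v); have := reach_none hy (v:=v); rewrite hv /= => -> // -> //.
by rewrite hm he.
Qed.

End Proofs.

Theorem mainTheorem2 (V Val : choiceType) (I P T : finType)
  (W : daw V Val I P T) :
  is_daw W -> one_safe W ->
  trace_equiv (rg_reach W) (init_dstate W) (rg_delta W)
              (Psi W (init_dstate W)) (@ts_delta _ _ _ _ _ W).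
Proof.
move=> _ hs.
exists (Psi W), id; split; first by move=> x y; apply: Psi_inj.
split; first by [].
split.
- move=> s0 ss [-> hst]; split => //.
  have : rg_reach W (init_dstate W) by exact: rg_init.
  elim: ss (init_dstate W) hst => [|[t s1] ss IH] s //= [[hr hf] hst] _.
  have [z hz] := step_fwd (hs _ hr) hf.
  have hr1 : rg_reach W s1 by exact: rg_step hr hf.
  split; last exact: IH.
  split; first exact: reach_ts.
  split; first exact: reach_ts.
  by exists z.
- move=> s0' ss' [-> hst].
  suff : forall s, rg_reach W s -> steps (@ts_delta _ _ _ _ _ W) (Psi W s) ss' ->
    exists ss, steps (rg_delta W) s ss /\ [seq (id p.1, Psi W p.2) | p <- ss] = ss'.
    move=> /(_ _ (rg_init W) hst) [ss [h1 h2]].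
    by exists (init_dstate W), ss.
  elim: ss' {hst} => [|[t ps1] ss' IH] s hr /=.
    by move=> _; exists [::].
  case=> [[_ [_ [z hz]]] hst].
  have [s1 [hf hp]] := step_bwd (hs _ hr) hz.
  have hr1 : rg_reach W s1 by exact: rg_step hr hf.
  rewrite -hp in hst.
  have [ss [h1 h2]] := IH s1 hr1 hst.
  exists ((t, s1) :: ss) => /=; split; first by [].
  by rewrite h2 hp.
Qed.
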